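(* Let $G$ be a triangle-free graph on $n\ge1$ vertices and $\lambda>0$. Let $I$ be drawn from the hard-core model on $G$ at fugacity $\lambda$ and, independently, let $v$ be a uniformly random vertex of $G$. Let $Z$ be the number of neighbors $u$ of $v$ that are uncovered, i.e. satisfy $N(u)\cap I=\emptyset$. Then \[ \frac1n\overline\alpha_G(\lambda)=\frac{\lambda}{1+\lambda}\,\mathbb E\big[(1+\lambda)^{-Z}\big]. \] Moreover, if $G$ has maximum degree $d\ge1$, then $\frac1n\overline\alpha_G(\lambda)\ge\frac{\lambda}{1+\lambda}\frac{\mathbb E Z}{d}$, with equality if $G$ is $d$-regular.
   Context: The hard-core model at fugacity $\lambda>0$ on $G$ is the distribution $\Pr[I]=\lambda^{|I|}/P_G(\lambda)$ on independent sets $I$ of $G$, with $P_G(\lambda)=\sum_{J}\lambda^{|J|}$ over all independent sets $J$. $\overline{\alpha}_G(\lambda)=\mathbb E|I|$. $N(u)$ denotes the set of neighbors of $u$. *)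

(* Defs.v *)
From HB Require Import structures.
From mathcomp Require Import all_boot all_order all_algebra.
Set Implicit Arguments. Unset Strict Implicit. Unset Printing Implicit Defensive.
Import Order.TTheory GRing.Theory Num.Theory.
Local Open Scope ring_scope.

Definition simple_graph (T : finType) (e : rel T) : Prop :=
  symmetric e /\ irreflexive e.

Definition triangle_free (T : finType) (e : rel T) : Prop :=
  forall x y z : T, e x y -> e y z -> ~~ e x z.

Definition nbhd (T : finType) (e : rel T) (u : T) : {set T} := [set w | e u w].

Definition indep (T : finType) (e : rel T) (I : {set T}) : bool :=
  [forall x in I, forall y in I, ~~ e x y].

Definition indep_poly (R : realFieldType) (T : finType) (e : rel T) (lam : R) : R :=
  \sum_(J : {set T} | indep e J) lam ^+ #|J|.

Definition hc_prob (R : realFieldType) (T : finType) (e : rel T) (lam : R)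
  (I : {set T}) : R :=
  if indep e I then lam ^+ #|I| / indep_poly e lam else 0.

Definition hc_exp (R : realFieldType) (T : finType) (e : rel T) (lam : R)
  (f : {set T} -> R) : R :=
  \sum_(I : {set T} | indep e I) hc_prob e lam I * f I.

Definition alpha_bar (R : realFieldType) (T : finType) (e : rel T) (lam : R) : R :=
  hc_exp e lam (fun I => (#|I|)%:R).

Definition Zcount (T : finType) (e : rel T) (I : {set T}) (v : T) : nat :=
  #|[set u in nbhd e v | [disjoint nbhd e u & I]]|.

Definition joint_exp (R : realFieldType) (T : finType) (e : rel T) (lam : R)
  (g : {set T} -> T -> R) : R :=
  (#|T|%:R)^-1 * \sum_(v : T) hc_exp e lam (fun I => g I v).

Definition max_degree (T : finType) (e : rel T) : nat :=
  \max_(v : T) #|nbhd e v|.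

Definition regular (T : finType) (e : rel T) (d : nat) : Prop :=
  forall v : T, #|nbhd e v| = d.

(* Main.v *)
Require Import Defs.
From HB Require Import structures.
From mathcomp Require Import all_boot all_order all_algebra.
From mathcomp Require Import ring lra.
Import Order.TTheory GRing.Theory Num.Theory.
Local Open Scope ring_scope.
Set Implicit Arguments. Unset Strict Implicit.

Lemma inN (T : finType) (e : rel T) u x : (x \in nbhd e u) = e u x.
Proof. by rewrite /nbhd inE. Qed.

Lemma indepP (T : finType) (e : rel T) (I : {set T}) :
  reflect (forall x y, x \in I -> y \in I -> ~~ e x y) (indep e I).
Proof.
apply: (iffP forall_inP) => [H x y xI yI | H x xI].
  by move/forall_inP: (H x xI) => /(_ y yI).
by apply/forall_inP => y yI; apply: H.
Qed.

Lemma disjP (T : finType) (A B : {set T}) :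
  reflect (forall x, x \in A -> x \notin B) [disjoint A & B].
Proof.
rewrite disjoint_subset; apply: (iffP subsetP) => H x /H; by rewrite inE.
Qed.

Lemma disjU (T : finType) (X A B : {set T}) :
  [disjoint X & A :|: B] = [disjoint X & A] && [disjoint X & B].
Proof. by rewrite !disjoints_subset setCU subsetI. Qed.

Lemma indep_sub (T : finType) (e : rel T) (A B : {set T}) :
  A \subset B -> indep e B -> indep e A.
Proof.
move=> /subsetP sAB /indepP H; apply/indepP => x y xA yA; apply: H; exact: sAB.
Qed.

Lemma keyB (T : finType) (e : rel T) v (A B : {set T}) :
  simple_graph e -> triangle_free e -> indep e A -> [disjoint nbhd e v & A] ->
  (indep e (A :|: B) && ((A :|: B) :\: nbhd e v == A)) && ((A :|: B) :&: nbhd e v == B)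
  = (B \subset [set u in nbhd e v | [disjoint nbhd e u & A]]).
Proof.
move=> [hsym hirr] htf iA dA.
have ANe : A :&: nbhd e v = set0 by rewrite setIC; apply: disjoint_setI0.
apply/idP/idP.
  move=> /andP[/andP[iU _] /eqP hB].
  have BN : B \subset nbhd e v by rewrite -hB subsetIr.
  apply/subsetP => b bB; rewrite inE (subsetP BN) //=.
  apply/disjP => x; rewrite inN => ebx; apply/negP => xA.
  by move/indepP: iU => /(_ b x); rewrite !inE bB xA orbT ebx => /(_ isT isT).
move=> /subsetP sB.
have BN : B \subset nbhd e v.
  by apply/subsetP => b /sB; rewrite inE => /andP[].
have hI : (A :|: B) :&: nbhd e v = B by rewrite setIUl ANe set0U; apply/setIidPl.
have hD : (A :|: B) :\: nbhd e v = A.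
  rewrite setDUl.
  have -> : A :\: nbhd e v = A by apply/setDidPl; rewrite disjoint_sym.
  by move: BN; rewrite -setD_eq0 => /eqP ->; rewrite setU0.
rewrite hI hD !eqxx !andbT.
apply/indepP => x y; rewrite !in_setU => /orP[xA|xB] /orP[yA|yB].
- by move/indepP: iA; apply.
- move: (sB y yB); rewrite inE => /andP[_ /disjP dy].
  apply/negP => exy; move: (dy x); rewrite inN hsym exy xA => /(_ isT).
  by [].
- move: (sB x xB); rewrite inE => /andP[_ /disjP dx].
  apply/negP => exy; move: (dx y); rewrite inN exy yA => /(_ isT).
  by [].
- apply/negP => exy.
  have evx : e v x by rewrite -inN (subsetP BN).
  have evy : e v y by rewrite -inN (subsetP BN).
  by move: (htf v x y evx exy); rewrite evy.
Qed.
Lemma sum_subsets (R : comNzRingType) (T : finType) (x : R) (n : nat) (U : {set T}) :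
  #|U| = n ->
  \sum_(B : {set T} | B \subset U) x ^+ #|B| = (1 + x) ^+ n.
Proof.
elim: n U => [|n IH] U hU.
  move/eqP: hU; rewrite cards_eq0 => /eqP ->.
  rewrite (eq_bigl (pred1 set0)); last by move=> B; rewrite /= subset0.
  by rewrite big_pred1_eq cards0 !expr0.
have : (0 < #|U|)%N by rewrite hU.
case/card_gt0P => a aU.
have hU' : #|U :\ a| = n by move: hU; rewrite (cardsD1 a U) aU add1n => -[].
rewrite (bigID [pred B : {set T} | a \in B]) /=.
rewrite [X in _ + X](eq_bigl (fun B : {set T} => B \subset U :\ a)); last first.
  by move=> B; rewrite subsetD1.
rewrite IH //.
rewrite (reindex_onto (fun B : {set T} => a |: B) (fun B : {set T} => B :\ a)); last first.
  by move=> B /andP[_ aB]; rewrite setD1K.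
rewrite (eq_bigl (fun B : {set T} => B \subset U :\ a)); last first.
  move=> B; rewrite /= setU11 andbT.
  apply/idP/idP.
  - move=> /andP[sU /eqP hB]; rewrite -hB subsetD1 setD11 andbT.
    exact: subset_trans (subD1set _ _) sU.
  - move=> sB; move: (sB); rewrite subsetD1 => /andP[sBU aB].
    by rewrite subUset sub1set aU sBU /= setU1K.
rewrite (eq_bigr (fun B : {set T} => x * x ^+ #|B|)); last first.
  move=> B sB; move: sB; rewrite subsetD1 => /andP[_ aB].
  by rewrite cardsU1 aB add1n exprS.
by rewrite -big_distrr /= IH // exprS mulrDl mul1r addrC.
Qed.

Lemma partB (R : realFieldType) (T : finType) (e : rel T) (lam : R) v :
  simple_graph e -> triangle_free e -> 1 + lam != 0 ->
  \sum_(I : {set T} | indep e I && [disjoint nbhd e v & I]) lam ^+ #|I|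
  = \sum_(I : {set T} | indep e I) lam ^+ #|I| * (1 + lam) ^- Zcount e I v.
Proof.
move=> hs ht hl.
set N := nbhd e v.
rewrite [RHS](partition_big (fun I : {set T} => I :\: N)
           (fun A : {set T} => indep e A && [disjoint N & A])) /=; last first.
  move=> I iI; rewrite (indep_sub _ iI) ?subsetDl //=.
  by rewrite disjoint_sym disjoints_subset subsetDr.
apply: eq_bigr => A /andP[iA dA].
set U := [set u in N | [disjoint nbhd e u & A]].
rewrite (reindex_onto (fun B : {set T} => A :|: B) (fun I : {set T} => I :&: N)); last first.
  by move=> I /andP[_ /eqP <-]; rewrite setUC setID.
rewrite (eq_bigl (fun B : {set T} => B \subset U)); last first.
  by move=> B; rewrite keyB.
have ANe : A :&: N = set0 by rewrite setIC; apply: disjoint_setI0.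
rewrite (eq_bigr (fun B : {set T} => lam ^+ #|A| * (1 + lam) ^- #|U| * lam ^+ #|B|)); last first.
  move=> B sB.
  have BN : B \subset N by apply/subsetP => b /(subsetP sB); rewrite inE => /andP[].
  have -> : #|A :|: B| = (#|A| + #|B|)%N.
    rewrite cardsU.
    have -> : A :&: B = set0.
      by apply/eqP; rewrite -subset0 -ANe setIS.
    by rewrite cards0 subn0.
  have -> : Zcount e (A :|: B) v = #|U|.
    rewrite /Zcount /U; apply: eq_card => u; rewrite !inE disjU.
    case evu: (e v u) => //=.
    suff -> : [disjoint nbhd e u & B] by rewrite andbT.
    apply/disjP => x; rewrite inN => eux; apply/negP => xB.
    have evx : e v x by rewrite -inN (subsetP BN).
    by move: (ht v u x evu eux); rewrite evx.
  by rewrite exprD mulrAC.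
rewrite -mulr_sumr (sum_subsets lam (erefl #|U|)) -mulrA mulVf ?mulr1 //.
by rewrite expf_neq0.
Qed.

Lemma partA (R : realFieldType) (T : finType) (e : rel T) (lam : R) v :
  simple_graph e ->
  \sum_(I : {set T} | indep e I && (v \in I)) lam ^+ #|I|
  = lam * \sum_(J : {set T} | indep e J && ([disjoint nbhd e v & J] && (v \notin J))) lam ^+ #|J|.
Proof.
move=> [hsym hirr].
rewrite (reindex_onto (fun J : {set T} => v |: J) (fun I : {set T} => I :\ v)); last first.
  by move=> I /andP[_ vI]; rewrite setD1K.
rewrite mulr_sumr; apply: eq_big => J.
  rewrite setU11 andbT; apply/idP/idP.
    move=> /andP[iU /eqP hJ].
    have vJ : v \notin J by rewrite -hJ setD11.
    rewrite vJ andbT (indep_sub (subsetU1 v J) iU) /=.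
    apply/disjP => x; rewrite inN => evx; apply/negP => xJ.
    by move/indepP: iU => /(_ v x); rewrite setU11 (setU1r v xJ) evx => /(_ isT isT).
  move=> /andP[iJ /andP[/disjP dJ vJ]]; rewrite setU1K // eqxx andbT.
  apply/indepP => x y; rewrite !in_setU1 => /orP[/eqP->|xJ] /orP[/eqP->|yJ].
  - by rewrite hirr.
  - by apply/negP => evy; move: (dJ y); rewrite inN evy yJ => /(_ isT).
  - by apply/negP => exv; move: (dJ x); rewrite inN hsym exv xJ => /(_ isT).
  - by move/indepP: iJ; apply.
move=> /andP[_ /eqP hJ].
have vJ : v \notin J by rewrite -hJ setD11.
by rewrite cardsU1 vJ add1n exprS.
Qed.

Lemma partC (R : realFieldType) (T : finType) (e : rel T) (lam : R) v :
  \sum_(I : {set T} | indep e I && [disjoint nbhd e v & I]) lam ^+ #|I|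
  = \sum_(I : {set T} | indep e I && (v \in I)) lam ^+ #|I|
  + \sum_(J : {set T} | indep e J && ([disjoint nbhd e v & J] && (v \notin J))) lam ^+ #|J|.
Proof.
rewrite (bigID [pred I : {set T} | v \in I]) /=; congr (_ + _); apply: eq_bigl => I.
  case vI: (v \in I); rewrite ?andbF ?andbT //.
  case iI: (indep e I) => //=.
  apply/disjP => x; rewrite inN => evx; apply/negP => xI.
  by move/indepP: iI => /(_ v x vI xI); rewrite evx.
by rewrite andbA.
Qed.

Lemma part1v (R : realFieldType) (T : finType) (e : rel T) (lam : R) v :
  simple_graph e -> 0 < lam ->
  \sum_(I : {set T} | indep e I && (v \in I)) lam ^+ #|I|
  = lam / (1 + lam) * \sum_(I : {set T} | indep e I && [disjoint nbhd e v & I]) lam ^+ #|I|.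
Proof.
move=> hs hl; rewrite partC partA //.
set b := \sum_(J | _) _.
have h1 : 1 + lam != 0 by rewrite gt_eqF // addr_gt0.
field; exact: h1.
Qed.

Lemma indic (R : realFieldType) (T : finType) (e : rel T) (lam : R) (c : {set T} -> bool) :
  \sum_(I : {set T} | indep e I) lam ^+ #|I| * (c I)%:R
  = \sum_(I : {set T} | indep e I && c I) lam ^+ #|I|.
Proof.
rewrite [RHS]big_mkcondr /=; apply: eq_bigr => I _.
by case: (c I); rewrite ?mulr1 ?mulr0.
Qed.

Lemma cardR (R : realFieldType) (T : finType) (S : {set T}) :
  (#|S|%:R : R) = \sum_x ((x \in S)%:R).
Proof.
rewrite -sum1_card natr_sum [RHS](bigID [pred x | x \in S]) /=.
rewrite [X in _ = _ + X]big1 ?addr0; last by move=> x /negbTE ->.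
by apply: eq_bigr => x ->.
Qed.

Lemma hc_expE (R : realFieldType) (T : finType) (e : rel T) (lam : R) f :
  hc_exp e lam f = (indep_poly e lam)^-1 * \sum_(I : {set T} | indep e I) lam ^+ #|I| * f I.
Proof.
rewrite /hc_exp mulr_sumr; apply: eq_bigr => I iI; rewrite /hc_prob iI.
by rewrite mulrAC mulrC mulrA.
Qed.

Lemma alphaE (R : realFieldType) (T : finType) (e : rel T) (lam : R) :
  alpha_bar e lam = (indep_poly e lam)^-1 *
     \sum_v \sum_(I : {set T} | indep e I && (v \in I)) lam ^+ #|I|.
Proof.
rewrite /alpha_bar hc_expE; congr (_ * _).
under [RHS]eq_bigr => v _ do rewrite -indic.
rewrite exchange_big /=; apply: eq_bigr => I _.
by rewrite cardR mulr_sumr.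
Qed.

Lemma Zsum (R : realFieldType) (T : finType) (e : rel T) (lam : R) :
  simple_graph e ->
  \sum_v \sum_(I : {set T} | indep e I) lam ^+ #|I| * (Zcount e I v)%:R
  = \sum_u #|nbhd e u|%:R *
       \sum_(I : {set T} | indep e I && [disjoint nbhd e u & I]) lam ^+ #|I|.
Proof.
move=> [hsym _].
transitivity (\sum_v \sum_u (e v u)%:R *
       \sum_(I : {set T} | indep e I && [disjoint nbhd e u & I]) lam ^+ #|I|).
  apply: eq_bigr => v _.
  rewrite /Zcount.
  under eq_bigr => I _ do rewrite cardR mulr_sumr.
  rewrite exchange_big /=; apply: eq_bigr => u _.
  rewrite -indic mulr_sumr; apply: eq_bigr => I _.
  by rewrite !inE; case: (e v u); case: [disjoint _ & _]; rewrite /= ?mulr1 ?mulr0 ?mul1r ?mul0r.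
rewrite exchange_big /=; apply: eq_bigr => u _.
rewrite -mulr_suml cardR; congr (_ * _); apply: eq_bigr => v _.
by rewrite inN hsym.
Qed.

Lemma P_gt0 (R : realFieldType) (T : finType) (e : rel T) (lam : R) :
  0 < lam -> 0 < indep_poly e lam.
Proof.
move=> hl; rewrite /indep_poly (bigD1 set0) /=; last first.
  by apply/indepP => x y; rewrite inE.
rewrite cards0 expr0 ltr_pwDl // sumr_ge0 // => I _.
by rewrite exprn_ge0 // ltW.
Qed.

Unset Implicit Arguments.
Set Strict Implicit.
Theorem mainTheorem7 (R : realFieldType) (T : finType) (e : rel T) (lam : R) :
  simple_graph e -> triangle_free e -> (0 < #|T|)%N -> 0 < lam ->
  (#|T|%:R)^-1 * alpha_bar e lam
    = lam / (1 + lam) * joint_exp e lam (fun I v => (1 + lam) ^- (Zcount e I v))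
  /\
  (forall d : nat, (1 <= d)%N -> max_degree e = d ->
     (#|T|%:R)^-1 * alpha_bar e lam
       >= lam / (1 + lam) * (joint_exp e lam (fun I v => (Zcount e I v)%:R) / d%:R)
     /\
     (regular e d ->
       (#|T|%:R)^-1 * alpha_bar e lam
         = lam / (1 + lam) * (joint_exp e lam (fun I v => (Zcount e I v)%:R) / d%:R))).
Proof.
move=> hs ht hn hl.
have h1 : 1 + lam != 0 by rewrite gt_eqF // addr_gt0.
set P := indep_poly e lam.
set D := fun u => \sum_(I : {set T} | indep e I && [disjoint nbhd e u & I]) lam ^+ #|I|.
have hA : alpha_bar e lam = P^-1 * (lam / (1 + lam) * \sum_v D v).
  rewrite alphaE; congr (_ * _); rewrite mulr_sumr; apply: eq_bigr => v _.
  by rewrite part1v.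
have hD0 : forall u, 0 <= D u.
  by move=> u; rewrite /D sumr_ge0 // => I _; rewrite exprn_ge0 // ltW.
have hJ : joint_exp e lam (fun I v => (Zcount e I v)%:R)
          = (#|T|%:R)^-1 * (P^-1 * \sum_u #|nbhd e u|%:R * D u).
  rewrite /joint_exp -Zsum //; congr (_ * _); rewrite mulr_sumr.
  by apply: eq_bigr => v _; rewrite hc_expE.
split.
  rewrite hA /joint_exp.
  have -> : \sum_v hc_exp e lam (fun I => (1 + lam) ^- Zcount e I v) = P^-1 * \sum_v D v.
    by rewrite mulr_sumr; apply: eq_bigr => v _; rewrite hc_expE -partB.
  ring.
move=> d hd hmax.
have hdR : 0 < (d%:R : R) by rewrite ltr0n.
have hc : 0 <= lam / (1 + lam) * (#|T|%:R)^-1 * P^-1.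
  rewrite !mulr_ge0 ?invr_ge0 ?ler0n ?ltW ?P_gt0 // ?divr_ge0 ?ltW //.
  by rewrite addr_gt0.
rewrite hJ hA.
have -> : (#|T|%:R)^-1 * (P^-1 * (lam / (1 + lam) * \sum_v D v))
   = lam / (1 + lam) * (#|T|%:R)^-1 * P^-1 * \sum_v D v by ring.
have -> : lam / (1 + lam) * ((#|T|%:R)^-1 * (P^-1 * \sum_u #|nbhd e u|%:R * D u) / d%:R)
   = lam / (1 + lam) * (#|T|%:R)^-1 * P^-1 * ((\sum_u #|nbhd e u|%:R * D u) / d%:R) by ring.
split.
  apply: ler_wpM2l => //.
  rewrite ler_pdivrMr // mulr_suml; apply: ler_sum => u _.
  rewrite mulrC ler_wpM2l // ler_nat -hmax /max_degree.
  exact: (leq_bigmax u).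
move=> hreg; congr (_ * _).
have -> : \sum_u #|nbhd e u|%:R * D u = d%:R * \sum_u D u.
  by rewrite mulr_sumr; apply: eq_bigr => u _; rewrite hreg.
by rewrite mulrC mulrA mulVf ?mul1r // gt_eqF.
Qed.
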